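(* Assume $f_1,f_0$ are $\ell_1$-Lipschitz with constants $L_1,L_0$. Define $$L_{UN}:=\sup_{\pi\in[0,1],\;0<\Delta\le\pi}\Big(\pi L_1+(1-\pi)L_0+|f_1(0,\pi-\Delta)-f_0(0,\pi-\Delta)|\Big).$$ If $L_{UN}<1$, then $f(\pi)=\pi f_1(0,\pi)+(1-\pi)f_0(0,\pi)$ satisfies $|f(x)-f(y)|\le L_{UN}|x-y|$ for all $x,y\in[0,1]$; consequently $f$ has a unique fixed point $\pi^{\mathfrak e}$, the unconstrained policy is equalizing in discrete time, and if $\max_{j\in\{A,B\}}|\pi_0(1|j)-\pi^{\mathfrak e}|\le d$ then $|\pi_t(1|A)-\pi_t(1|B)|\le 2dL_{UN}^t$ for all $t\ge0$.
   Context: Two groups $A,B$; at time $t$ group $j$ has qualification profile $\pi_t(1|j)\in[0,1]$, $\pi_t(0|j)=1-\pi_t(1|j)$. Selection rates $\beta_t(v;j)=\tau(v;j)\pi_t(v|j)$ for a policy $\tau(v;j)\in[0,1]$. Dynamics: continuously differentiable $f_0,f_1:[0,1]^2\to[0,1]$, and in discrete time $\pi_{t+1}(1|j)=\pi_t(1|j)f_1(\beta_t(0;j),\beta_t(1;j))+(1-\pi_t(1|j))f_0(\beta_t(0;j),\beta_t(1;j))$. Under the unconstrained policy ($\tau(1;j)=1$, $\tau(0;j)=0$) each group evolves by $\pi_{t+1}=f(\pi_t)$. ''$\ell_1$-Lipschitz with constant $L_i$'' means $|f_i(x_1,x_2)-f_i(y_1,y_2)|\le L_i(|x_1-y_1|+|x_2-y_2|)$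 for all $x_1,x_2,y_1,y_2\in[0,1]$. Equalizing: $|\pi_t(1|A)-\pi_t(1|B)|\to0$ for all initial profiles. *)

(* Defs.v *)
From Stdlib Require Import Reals.
Open Scope R_scope.

Definition in01 (x : R) : Prop := 0 <= x <= 1.

Definition maps_unit_square (g : R -> R -> R) : Prop :=
  forall x1 x2, in01 x1 -> in01 x2 -> in01 (g x1 x2).

Definition l1_lipschitz (g : R -> R -> R) (L : R) : Prop :=
  forall x1 x2 y1 y2, in01 x1 -> in01 x2 -> in01 y1 -> in01 y2 ->
    Rabs (g x1 x2 - g y1 y2) <= L * (Rabs (x1 - y1) + Rabs (x2 - y2)).

(* qualification profile pi(v|j): v = true stands for 1, false for 0 *)
Definition profile (p : R) (v : bool) : R := if v then p else 1 - p.

Definition beta (tau : bool -> R) (p : R) (v : bool) : R := tau v * profile p v.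

(* one discrete-time step of pi(1|j) under policy tau *)
Definition step (f0 f1 : R -> R -> R) (tau : bool -> R) (p : R) : R :=
  p * f1 (beta tau p false) (beta tau p true)
  + (1 - p) * f0 (beta tau p false) (beta tau p true).

Fixpoint traj (f0 f1 : R -> R -> R) (tau : bool -> R) (p0 : R) (t : nat) : R :=
  match t with
  | O => p0
  | S t' => step f0 f1 tau (traj f0 f1 tau p0 t')
  end.

Definition tauUN (v : bool) : R := if v then 1 else 0.

Definition fUN (f0 f1 : R -> R -> R) (p : R) : R :=
  p * f1 0 p + (1 - p) * f0 0 p.

Definition LUN_set (f0 f1 : R -> R -> R) (L0 L1 : R) (z : R) : Prop :=
  exists p D, in01 p /\ 0 < D /\ D <= p /\
    z = p * L1 + (1 - p) * L0 + Rabs (f1 0 (p - D) - f0 0 (p - D)).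

Definition equalizing (f0 f1 : R -> R -> R) (tauA tauB : bool -> R) : Prop :=
  forall pA pB, in01 pA -> in01 pB ->
    Un_cv (fun t => Rabs (traj f0 f1 tauA pA t - traj f0 f1 tauB pB t)) 0.

(* Main.v *)
Require Import Defs.
From Stdlib Require Import Reals Lra Lia Psatz.
Open Scope R_scope.

Lemma lip_nonneg g L : l1_lipschitz g L -> 0 <= L.
Proof.
  intros H. specialize (H 0 0 1 0).
  unfold in01 in H. rewrite Rminus_0_r, Rabs_R0, Rplus_0_r in H.
  assert (Hr : Rabs (0 - 1) = 1) by (rewrite Rabs_left; lra).
  rewrite Hr in H. pose proof (Rabs_pos (g 0 0 - g 1 0)).
  assert (A := H ltac:(lra) ltac:(lra) ltac:(lra) ltac:(lra)). lra.
Qed.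

Lemma fUN_in01 f0 f1 p : maps_unit_square f0 -> maps_unit_square f1 ->
  in01 p -> in01 (fUN f0 f1 p).
Proof.
  intros H0 H1 Hp. unfold in01 in *. 
  assert (z : 0 <= 0 <= 1) by lra.
  pose proof (H0 0 p z Hp). pose proof (H1 0 p z Hp). unfold in01 in *.
  unfold fUN. nra.
Qed.

Lemma step_UN f0 f1 p : step f0 f1 tauUN p = fUN f0 f1 p.
Proof.
  unfold step, fUN, beta, tauUN, profile. simpl.
  rewrite Rmult_0_l, Rmult_1_l. reflexivity.
Qed.

Lemma lip_half f0 f1 L0 L1 LUN x y :
  l1_lipschitz f1 L1 -> l1_lipschitz f0 L0 ->
  is_lub (LUN_set f0 f1 L0 L1) LUN -> in01 x -> in01 y -> y < x ->
  Rabs (fUN f0 f1 x - fUN f0 f1 y) <= LUN * (x - y).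
Proof.
  intros H1 H0 [Hub _] Hx Hy Hxy.
  assert (E : fUN f0 f1 x - fUN f0 f1 y =
     x * (f1 0 x - f1 0 y) + (1 - x) * (f0 0 x - f0 0 y) + (x - y) * (f1 0 y - f0 0 y))
    by (unfold fUN; ring).
  rewrite E.
  assert (z : in01 0) by (unfold in01; lra).
  pose proof (H1 0 x 0 y z Hx z Hy) as A1.
  pose proof (H0 0 x 0 y z Hx z Hy) as A0.
  replace (0 - 0) with 0 in A1, A0 by ring. rewrite Rabs_R0 in A1, A0.
  rewrite (Rabs_right (x - y)) in A1, A0 by lra.
  assert (Hmem : LUN_set f0 f1 L0 L1 (x * L1 + (1 - x) * L0 + Rabs (f1 0 y - f0 0 y))).
  { exists x, (x - y). split; [exact Hx|]. unfold in01 in *. split; [lra|]. split; [lra|].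
    replace (x - (x - y)) with y by ring. reflexivity. }
  pose proof (Hub _ Hmem) as B. unfold in01 in *.
  eapply Rle_trans; [apply Rabs_triang|].
  eapply Rle_trans; [apply Rplus_le_compat_r; apply Rabs_triang|].
  rewrite !Rabs_mult. rewrite (Rabs_right x) by lra.
  rewrite (Rabs_right (1 - x)) by lra. rewrite (Rabs_right (x - y)) by lra.
  assert (x * Rabs (f1 0 x - f1 0 y) <= x * (L1 * (0 + (x - y)))) by (apply Rmult_le_compat_l; lra).
  assert ((1 - x) * Rabs (f0 0 x - f0 0 y) <= (1 - x) * (L0 * (0 + (x - y)))) by (apply Rmult_le_compat_l; lra).
  assert ((x - y) * (x * L1 + (1 - x) * L0 + Rabs (f1 0 y - f0 0 y)) <= (x - y) * LUN) by (apply Rmult_le_compat_l; lra).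
  nra.
Qed.

Definition clamp (x : R) : R := if Rle_dec x 0 then 0 else if Rle_dec x 1 then x else 1.

Lemma clamp_in01 x : in01 (clamp x).
Proof. unfold clamp, in01; destruct Rle_dec; [lra|]; destruct Rle_dec; lra. Qed.

Lemma clamp_id x : in01 x -> clamp x = x.
Proof. unfold clamp, in01; intros; destruct Rle_dec; [lra|]; destruct Rle_dec; lra. Qed.

Lemma clamp_lip x y : Rabs (clamp x - clamp y) <= Rabs (x - y).
Proof.
  unfold clamp. apply Rabs_le.
  destruct (Rle_dec x 0), (Rle_dec y 0); try destruct (Rle_dec x 1); try destruct (Rle_dec y 1);
  unfold Rabs; destruct Rcase_abs; lra.
Qed.

Lemma lip_cont (h : R -> R) K : 0 <= K -> (forall x y, Rabs (h x - h y) <= K * Rabs (x - y)) ->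
  continuity h.
Proof.
  intros HK Hl x. unfold continuity_pt, continue_in, limit1_in, limit_in.
  intros eps He. exists (eps / (K + 1)). split.
  { apply Rdiv_lt_0_compat; lra. }
  intros y [_ Hy]. simpl in *. unfold R_dist in *.
  eapply Rle_lt_trans; [apply Hl|].
  assert (Hd : Rabs (y - x) * (K + 1) < eps).
  { apply (Rmult_lt_compat_r (K+1)) in Hy; [|lra].
    unfold Rdiv in Hy. rewrite Rmult_assoc, Rinv_l in Hy by lra. lra. }
  pose proof (Rabs_pos (y - x)). nra.
Qed.

Theorem mainTheorem2 (f0 f1 : R -> R -> R) (L0 L1 LUN : R) :
  maps_unit_square f0 -> maps_unit_square f1 ->
  l1_lipschitz f1 L1 -> l1_lipschitz f0 L0 ->
  is_lub (LUN_set f0 f1 L0 L1) LUN ->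
  LUN < 1 ->
  (forall x y, in01 x -> in01 y ->
     Rabs (fUN f0 f1 x - fUN f0 f1 y) <= LUN * Rabs (x - y)) /\
  exists pe : R,
    (in01 pe /\ fUN f0 f1 pe = pe /\
     (forall q, in01 q -> fUN f0 f1 q = q -> q = pe)) /\
    equalizing f0 f1 tauUN tauUN /\
    (forall (d pA pB : R), in01 pA -> in01 pB ->
       Rmax (Rabs (pA - pe)) (Rabs (pB - pe)) <= d ->
       forall t : nat,
         Rabs (traj f0 f1 tauUN pA t - traj f0 f1 tauUN pB t) <= 2 * d * LUN ^ t).
Proof.
  intros M0 M1 H1 H0 Hlub Hlt.
  assert (HL1 := lip_nonneg _ _ H1). assert (HL0 := lip_nonneg _ _ H0).
  assert (HLn : 0 <= LUN).
  { destruct Hlub as [Hub _].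
    assert (Hm : LUN_set f0 f1 L0 L1 (1 * L1 + (1 - 1) * L0 + Rabs (f1 0 (1 - 1) - f0 0 (1 - 1)))).
    { exists 1, 1. unfold in01. split; [lra|]. split; [lra|]. split; [lra|]. reflexivity. }
    pose proof (Hub _ Hm). pose proof (Rabs_pos (f1 0 (1 - 1) - f0 0 (1 - 1))). lra. }
  assert (Lip : forall x y, in01 x -> in01 y ->
     Rabs (fUN f0 f1 x - fUN f0 f1 y) <= LUN * Rabs (x - y)).
  { intros x y Hx Hy. destruct (Rtotal_order x y) as [Hxy|[Hxy|Hxy]].
    - rewrite Rabs_minus_sym, (Rabs_minus_sym x y), (Rabs_right (y - x)) by lra.
      apply lip_half with L0 L1; auto.
    - subst. rewrite !Rminus_diag, Rabs_R0. lra.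
    - rewrite (Rabs_right (x - y)) by lra. apply lip_half with L0 L1; auto. }
  split; [exact Lip|].
  set (h := fun x => clamp x - fUN f0 f1 (clamp x)).
  assert (Hc : continuity h).
  { apply (lip_cont h (1 + LUN)); [lra|]. intros x y. unfold h.
    pose proof (clamp_lip x y). pose proof (Lip _ _ (clamp_in01 x) (clamp_in01 y)).
    replace (clamp x - fUN f0 f1 (clamp x) - (clamp y - fUN f0 f1 (clamp y)))
      with ((clamp x - clamp y) - (fUN f0 f1 (clamp x) - fUN f0 f1 (clamp y))) by ring.
    eapply Rle_trans; [apply Rabs_triang|]. rewrite Rabs_Ropp. nra. }
  assert (Hex : exists pe, in01 pe /\ fUN f0 f1 pe = pe).
  { assert (z0 : in01 0) by (unfold in01; lra). assert (z1 : in01 1) by (unfold in01; lra).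
    pose proof (fUN_in01 _ _ _ M0 M1 z0) as F0. pose proof (fUN_in01 _ _ _ M0 M1 z1) as F1.
    unfold in01 in F0, F1.
    destruct (Req_dec (fUN f0 f1 0) 0) as [E0|E0]; [exists 0; auto|].
    destruct (Req_dec (fUN f0 f1 1) 1) as [E1|E1]; [exists 1; auto|].
    assert (h0 : h 0 < 0). { unfold h. rewrite clamp_id by exact z0. lra. }
    assert (h1 : 0 < h 1). { unfold h. rewrite clamp_id by exact z1. lra. }
    destruct (IVT h 0 1 Hc ltac:(lra) h0 h1) as [z [Hz Hhz]].
    exists z. assert (in01 z) by (unfold in01; lra). split; auto.
    unfold h in Hhz. rewrite clamp_id in Hhz by auto. lra. }
  destruct Hex as [pe [Hpe Fpe]].
  assert (Huniq : forall q, in01 q -> fUN f0 f1 q = q -> q = pe).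
  { intros q Hq Fq. pose proof (Lip q pe Hq Hpe). rewrite Fq, Fpe in H.
    pose proof (Rabs_pos (q - pe)).
    assert (Rabs (q - pe) = 0) by nra.
    destruct (Rcase_abs (q - pe)) as [Hc1|Hc1]; [rewrite Rabs_left in H3 by lra | rewrite Rabs_right in H3 by lra]; lra. }
  assert (Tin : forall p t, in01 p -> in01 (traj f0 f1 tauUN p t)).
  { intros p t Hp. induction t; simpl; auto. rewrite step_UN. apply fUN_in01; auto. }
  assert (Tc : forall pA pB t, in01 pA -> in01 pB ->
     Rabs (traj f0 f1 tauUN pA t - traj f0 f1 tauUN pB t) <= LUN ^ t * Rabs (pA - pB)).
  { intros pA pB t HA HB. induction t; simpl.
    - lra.
    - rewrite !step_UN. eapply Rle_trans; [apply Lip; apply Tin; auto|].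
      rewrite Rmult_assoc. apply Rmult_le_compat_l; auto. }
  exists pe. split; [auto|]. split.
  - intros pA pB HA HB eps He. unfold R_dist.
    assert (Ha : Rabs LUN < 1) by (rewrite Rabs_right; lra).
    destruct (pow_lt_1_zero LUN Ha eps He) as [N HN]. exists N. intros n Hn.
    rewrite Rminus_0_r, Rabs_Rabsolu.
    specialize (HN n Hn). rewrite Rabs_right in HN by (apply Rle_ge, pow_le; lra).
    pose proof (Tc pA pB n HA HB).
    assert (Rabs (pA - pB) <= 1) by (apply Rabs_le; unfold in01 in *; lra).
    pose proof (pow_le LUN n HLn). nra.
  - intros d pA pB HA HB Hd t.
    pose proof (Tc pA pB t HA HB).
    pose proof (Rmax_l (Rabs (pA - pe)) (Rabs (pB - pe))).
    pose proof (Rmax_r (Rabs (pA - pe)) (Rabs (pB - pe))).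
    assert (Rabs (pA - pB) <= 2 * d).
    { replace (pA - pB) with ((pA - pe) + - (pB - pe)) by ring.
      eapply Rle_trans; [apply Rabs_triang|]. rewrite Rabs_Ropp. lra. }
    pose proof (pow_le LUN t HLn). nra.
Qed.
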